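(* Let $\rho$ be a single-qubit state with spectral decomposition $\rho=\lambda_0|\psi_0\rangle\langle\psi_0|+\lambda_1|\psi_1\rangle\langle\psi_1|$, $\lambda_0\neq\lambda_1$, and let $U(\bm\varphi)$ be any smooth family of $2\times2$ unitaries depending on two real parameters $\bm\varphi=(\varphi_1,\varphi_2)$. Let $\rho_{\bm\varphi}=U(\bm\varphi)\rho U(\bm\varphi)^\dagger$ and $|\psi_0(\bm\varphi)\rangle=U(\bm\varphi)|\psi_0\rangle$. Then the Uhlmann matrices satisfy $$D_{ij}(\rho_{\bm\varphi})=\pm\big(2\,\mathrm{Tr}(\rho^2)-1\big)^{3/2}\,D_{ij}\big(|\psi_0(\bm\varphi)\rangle\langle\psi_0(\bm\varphi)|\big)=\pm 4\big(2\,\mathrm{Tr}(\rho^2)-1\big)^{3/2}\,\mathrm{Im}\,\langle\psi_0|\mathcal{H}_i\mathcal{H}_j|\psi_0\rangle,$$ with the sign $+$ if $\lambda_0>\lambda_1$ and $-$ if $\lambda_0<\lambda_1$.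
   Context: Effective Hamiltonians: $\mathcal{H}_j:=i\,(\partial_{\varphi_j}U^\dagger(\bm\varphi))U(\bm\varphi)$. For a family of states $\rho_{\bm\varphi}$, the symmetric logarithmic derivatives $L_{\varphi_j}$ are Hermitian operators with $\partial_{\varphi_j}\rho_{\bm\varphi}=\tfrac12(L_{\varphi_j}\rho_{\bm\varphi}+\rho_{\bm\varphi}L_{\varphi_j})$, and the Uhlmann matrix is $D_{ij}(\rho_{\bm\varphi})=\mathrm{Im}\,\mathrm{Tr}(\rho_{\bm\varphi}L_{\varphi_i}L_{\varphi_j})=\frac{1}{2i}\mathrm{Tr}(\rho_{\bm\varphi}[L_{\varphi_i},L_{\varphi_j}])$ (independent of the non-unique part of $L$ outside the support). *)

(* Defs.v *)
From HB Require Import structures.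
From mathcomp Require Import all_boot all_order all_algebra.
From mathcomp Require Import all_classical all_reals all_analysis.
From mathcomp Require Export complex.
Set Implicit Arguments. Unset Strict Implicit. Unset Printing Implicit Defensive.
Import Order.TTheory GRing.Theory Num.Theory numFieldNormedType.Exports.
Local Open Scope ring_scope.

Section QDefs.
Variable R : realType.
Local Notation C := (R[i]).

Definition adj (m n : nat) (A : 'M[C]_(m, n)) : 'M[C]_(n, m) :=
  (map_mx (@conjc R) A)^T.

Definition evec (k : 'I_2) : 'rV[R]_2 := delta_mx 0 k.

Definition rpd (k : 'I_2) (g : 'rV[R]_2 -> R) (x : 'rV[R]_2) : R :=
  'D_(evec k) g x.

Fixpoint iter_rpd (ks : seq 'I_2) (g : 'rV[R]_2 -> R) : 'rV[R]_2 -> R :=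
  match ks with
  | [::] => g
  | k :: ks' => rpd k (iter_rpd ks' g)
  end.

Definition smooth_fun (g : 'rV[R]_2 -> R) : Prop :=
  forall (ks : seq 'I_2) (x : 'rV[R]_2), differentiable (iter_rpd ks g) x.

Definition smooth_mx (F : 'rV[R]_2 -> 'M[C]_2) : Prop :=
  forall r c : 'I_2,
    smooth_fun (fun y => complex.Re (F y r c)) /\ smooth_fun (fun y => complex.Im (F y r c)).

Definition pd (k : 'I_2) (F : 'rV[R]_2 -> 'M[C]_2) (x : 'rV[R]_2) : 'M[C]_2 :=
  \matrix_(r, c) Complex (rpd k (fun y => complex.Re (F y r c)) x)
                         (rpd k (fun y => complex.Im (F y r c)) x).

Definition effH (U : 'rV[R]_2 -> 'M[C]_2) (k : 'I_2) (x : 'rV[R]_2) : 'M[C]_2 :=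
  (Complex 0 1) *: (pd k (fun y => adj (U y)) x *m U x).

Definition is_SLD (rho : 'rV[R]_2 -> 'M[C]_2) (k : 'I_2) (x : 'rV[R]_2)
  (L : 'M[C]_2) : Prop :=
  adj L = L /\ pd k rho x = (2^-1) *: (L *m rho x + rho x *m L).

Definition uhlmann (rho Li Lj : 'M[C]_2) : R := complex.Im (\tr (rho *m Li *m Lj)).

End QDefs.

(* Main.v *)
Require Import Defs.
From HB Require Import structures.
From mathcomp Require Import all_boot all_order all_algebra.
From mathcomp Require Import all_classical all_reals all_analysis.
From mathcomp Require Import complex.
From mathcomp Require Import ring lra.
Import Order.TTheory GRing.Theory Num.Theory.
Local Open Scope ring_scope.
Set Implicit Arguments. Unset Strict Implicit.

Section S.
Variable R : realType.
Local Notation C := (R[i]).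
Lemma cReM (x y : C) : complex.Re (x*y) = complex.Re x * complex.Re y - complex.Im x * complex.Im y.
Proof. by case: x => a b; case: y => c d. Qed.
Lemma cImM (x y : C) : complex.Im (x*y) = complex.Re x * complex.Im y + complex.Im x * complex.Re y.
Proof. by case: x => a b; case: y => c d /=; rewrite addrC. Qed.
Lemma cReD (x y : C) : complex.Re (x+y) = complex.Re x + complex.Re y.
Proof. by case: x => a b; case: y => c d. Qed.
Lemma cImD (x y : C) : complex.Im (x+y) = complex.Im x + complex.Im y.
Proof. by case: x => a b; case: y => c d. Qed.
Lemma sum2 (F : 'I_2 -> C) : \sum_(i < 2) F i = F 0 + F 1.
Proof. rewrite big_ord_recl big_ord1; congr (_ + F _); exact: val_inj. Qed.
Lemma mulmx2E (A B : 'M[C]_2) r c : (A *m B) r c = A r 0 * B 0 c + A r 1 * B 1 c.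
Proof. by rewrite mxE sum2. Qed.
Lemma dagE m n (A : 'M[C]_(m,n)) r c : adj A r c = conjc (A c r).
Proof. by rewrite /adj !mxE. Qed.
Lemma dagM m n p (A : 'M[C]_(m,n)) (B : 'M[C]_(n,p)) : adj (A *m B) = adj B *m adj A.
Proof. by rewrite /adj map_mxM trmx_mul. Qed.
Lemma dagK m n (A : 'M[C]_(m,n)) : adj (adj A) = A.
Proof. by apply/matrixP => r c; rewrite !dagE conjcK. Qed.
Lemma dagD m n (A B : 'M[C]_(m,n)) : adj (A + B) = adj A + adj B.
Proof. by apply/matrixP => r c; rewrite /adj !mxE rmorphD. Qed.
Lemma dagN m n (A : 'M[C]_(m,n)) : adj (- A) = - adj A.
Proof. by apply/matrixP => r c; rewrite /adj !mxE rmorphN. Qed.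
Lemma dagZ m n a (A : 'M[C]_(m,n)) : adj (a *: A) = conjc a *: adj A.
Proof. by apply/matrixP => r c; rewrite /adj !mxE rmorphM. Qed.
Lemma dag1 n : adj (1%:M : 'M[C]_n) = 1%:M.
Proof. by apply/matrixP => r c; rewrite /adj !mxE eq_sym conjc_nat. Qed.
Lemma dag0 m n : adj (0 : 'M[C]_(m,n)) = 0.
Proof. by apply/matrixP => r c; rewrite /adj !mxE rmorph0. Qed.
End S.

Set Implicit Arguments. Unset Strict Implicit.

Section S.
Variable R : realType.
Local Notation C := (R[i]).
Implicit Types (F G : 'rV[R]_2 -> 'M[C]_2).

Definition mder (k : 'I_2) F x := forall r c,
  derivable (fun y => complex.Re (F y r c)) x (evec R k) /\
  derivable (fun y => complex.Im (F y r c)) x (evec R k).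

Lemma mder_smooth k F x : smooth_mx F -> mder k F x.
Proof.
move=> sF r c; have [h1 h2] := sF r c.
by split; apply: diff_derivable; [exact: (h1 [::] x) | exact: (h2 [::] x)].
Qed.

Lemma pd_cst k (M : 'M[C]_2) x : pd k (fun _ => M) x = 0.
Proof.
apply/matrixP => r c; rewrite !mxE /rpd.
have -> : (fun _ : 'rV[R]_2 => complex.Re (M r c)) = cst (complex.Re (M r c)) by [].
have -> : (fun _ : 'rV[R]_2 => complex.Im (M r c)) = cst (complex.Im (M r c)) by [].
by rewrite !derive_cst.
Qed.

Lemma mder_cst k (M : 'M[C]_2) x : mder k (fun _ => M) x.
Proof. by move=> r c; split; exact: derivable_cst. Qed.

Lemma mder_adj k F x : mder k F x -> mder k (fun y => adj (F y)) x.
Proof.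
move=> dF r c; have [h1 h2] := dF c r; split.
  rewrite (_ : (fun y => _) = (fun y => complex.Re (F y c r))) //.
  by apply/funext => y; rewrite dagE; case: (F y c r).
rewrite (_ : (fun y => _) = - (fun y => complex.Im (F y c r))); first exact: derivableN.
apply/funext => y; transitivity (- complex.Im (F y c r)); last by []. by rewrite dagE; case: (F y c r).
Qed.

Lemma pd_adj k F x : mder k F x -> pd k (fun y => adj (F y)) x = adj (pd k F x).
Proof.
move=> dF; apply/matrixP => r c; have [h1 h2] := dF c r.
rewrite dagE !mxE /rpd.
rewrite (_ : (fun y => complex.Re (adj (F y) r c)) = (fun y => complex.Re (F y c r))); last first.
  by apply/funext => y; rewrite dagE; case: (F y c r).
rewrite (_ : (fun y => complex.Im (adj (F y) r c)) = - (fun y => complex.Im (F y c r))); last first.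
  apply/funext => y; transitivity (- complex.Im (F y c r)); last by []. by rewrite dagE; case: (F y c r).
by rewrite deriveN.
Qed.


Lemma mulE (F G : 'rV[R]_2 -> 'M[C]_2) r c :
  (fun y => complex.Re ((F y *m G y) r c)) =
  ((fun y => complex.Re (F y r 0)) * (fun y => complex.Re (G y 0 c)) -
   (fun y => complex.Im (F y r 0)) * (fun y => complex.Im (G y 0 c))) +
  ((fun y => complex.Re (F y r 1)) * (fun y => complex.Re (G y 1 c)) -
   (fun y => complex.Im (F y r 1)) * (fun y => complex.Im (G y 1 c))).
Proof. by apply/funext => y /=; rewrite mulmx2E cReD !cReM. Qed.

Lemma mulIE (F G : 'rV[R]_2 -> 'M[C]_2) r c :
  (fun y => complex.Im ((F y *m G y) r c)) =
  ((fun y => complex.Re (F y r 0)) * (fun y => complex.Im (G y 0 c)) +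
   (fun y => complex.Im (F y r 0)) * (fun y => complex.Re (G y 0 c))) +
  ((fun y => complex.Re (F y r 1)) * (fun y => complex.Im (G y 1 c)) +
   (fun y => complex.Im (F y r 1)) * (fun y => complex.Re (G y 1 c))).
Proof. by apply/funext => y /=; rewrite mulmx2E cImD !cImM. Qed.

Lemma mder_mul k F G x : mder k F x -> mder k G x ->
  mder k (fun y => F y *m G y) x.
Proof.
move=> dF dG r c.
have [a0 b0] := dF r 0; have [a1 b1] := dF r 1.
have [c0 d0] := dG 0 c; have [c1 d1] := dG 1 c.
rewrite mulE mulIE; split.
  exact: (derivableD (derivableB (derivableM a0 c0) (derivableM b0 d0))
                     (derivableB (derivableM a1 c1) (derivableM b1 d1))).
exact: (derivableD (derivableD (derivableM a0 d0) (derivableM b0 c0))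
                   (derivableD (derivableM a1 d1) (derivableM b1 c1))).
Qed.

Lemma sE (a b : R) : a *: b = a * b. Proof. by []. Qed.

Lemma pd_mul k F G x : mder k F x -> mder k G x ->
  pd k (fun y => F y *m G y) x = pd k F x *m G x + F x *m pd k G x.
Proof.
move=> dF dG; apply/matrixP => r c.
have [a0 b0] := dF r 0; have [a1 b1] := dF r 1.
have [c0 d0] := dG 0 c; have [c1 d1] := dG 1 c.
rewrite mxE /rpd mulE mulIE.
rewrite (deriveD (derivableB (derivableM a0 c0) (derivableM b0 d0))
                     (derivableB (derivableM a1 c1) (derivableM b1 d1))).
rewrite (deriveB (derivableM a0 c0) (derivableM b0 d0)).
rewrite (deriveB (derivableM a1 c1) (derivableM b1 d1)).
rewrite (deriveD (derivableD (derivableM a0 d0) (derivableM b0 c0))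
                   (derivableD (derivableM a1 d1) (derivableM b1 c1))).
rewrite (deriveD (derivableM a0 d0) (derivableM b0 c0)).
rewrite (deriveD (derivableM a1 d1) (derivableM b1 c1)).
rewrite (deriveM a0 c0) (deriveM b0 d0) (deriveM a1 c1) (deriveM b1 d1).
rewrite (deriveM a0 d0) (deriveM b0 c0) (deriveM a1 d1) (deriveM b1 c1).
rewrite !mxE !sum2; apply/eqP; rewrite eq_complex; apply/andP; split; apply/eqP;
  rewrite ?cReD ?cImD ?cReM ?cImM !mxE /rpd /=.
all: rewrite !sE; ring.
Qed.
End S.

Unset Implicit Arguments. Set Strict Implicit.
Section S.
Variable R : realType.
Local Notation C := (R[i]).
Local Notation iC := (Complex (0:R) 1).

Lemma conj_i : conjc iC = - iC.
Proof. by apply/eqP; rewrite eq_complex /= oppr0 !eqxx. Qed.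
Lemma i2 : iC * iC = -1.
Proof. by rewrite -expr2 sqr_i. Qed.

Lemma effH_herm (U : 'rV[R]_2 -> 'M[C]_2) k x :
  (forall y, adj (U y) *m U y = 1%:M) -> smooth_mx U ->
  adj (effH U k x) = effH U k x /\ pd k U x = U x *m (iC *: effH U k x).
Proof.
move=> unit sU.
have dU : mder k U x by apply: mder_smooth.
have d0 : pd k (fun y => adj (U y) *m U y) x = 0.
  by rewrite (_ : (fun y => _) = fun _ => 1%:M) ?pd_cst //; apply/funext => y; rewrite unit.
rewrite (pd_mul (mder_adj dU) dU) (pd_adj dU) in d0.
move: d0; set A := pd k U x => d0.
have eA : adj A *m U x = - (adj (U x) *m A) by apply/eqP; rewrite -subr_eq0 opprK d0.
have UU : U x *m adj (U x) = 1%:M by apply: mulmx1C; exact: unit.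
rewrite /effH (pd_adj dU) -/A; split.
  by rewrite dagZ dagM dagK conj_i eA; apply/matrixP => r c; rewrite !mxE mulNr mulrN.
by rewrite scalerA i2 scaleN1r eA (opprK (adj (U x) *m A)) mulmxA UU mul1mx.

Qed.

Lemma pd_conj (U : 'rV[R]_2 -> 'M[C]_2) (M : 'M[C]_2) k x :
  (forall y, adj (U y) *m U y = 1%:M) -> smooth_mx U ->
  pd k (fun y => U y *m M *m adj (U y)) x =
  U x *m (iC *: (effH U k x *m M - M *m effH U k x)) *m adj (U x).
Proof.
move=> unit sU.
have dU : mder k U x by apply: mder_smooth.
have [hH eA] := @effH_herm U k x unit sU.
rewrite (pd_mul (mder_mul dU (mder_cst k M x)) (mder_adj dU)).
rewrite (pd_mul dU (mder_cst k M x)) pd_cst (pd_adj dU) eA.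
rewrite dagM dagZ hH conj_i.
move: (effH U k x) => H.
apply/matrixP => r c.
do 4 (rewrite ?dagE ?mxE ?sum2).
ring.
Qed.
End S.

Set Implicit Arguments. Unset Strict Implicit.

Section S.
Variable R : realType.
Local Notation C := (R[i]).
Local Notation iC := (Complex (0:R) 1).

Definition Dm (l0 l1 : R) : 'M[C]_2 :=
  \matrix_(a, b) if a == b then (if a == 0 then Complex l0 0 else Complex l1 0) else 0.

Lemma half_eq (X Y : C) : X = 2^-1 * Y -> Y = 2 * X.
Proof.
move=> ->; rewrite mulrA divff ?mul1r //.
Qed.

Lemma two_neq0 : (2 : C) != 0.
Proof. by rewrite pnatr_eq0. Qed.

Lemma Re2 : complex.Re (2 : C) = 2. Proof. by []. Qed.
Lemma Im2 : complex.Im (2 : C) = 0. Proof. by rewrite /= addr0. Qed.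

Lemma core_entries (l0 l1 : R) (K1 K2 L1 L2 : 'M[C]_2) :
  l0 + l1 = 1 -> adj K1 = K1 -> adj K2 = K2 ->
  iC *: (K1 *m Dm l0 l1 - Dm l0 l1 *m K1) = 2^-1 *: (L1 *m Dm l0 l1 + Dm l0 l1 *m L1) ->
  iC *: (K2 *m Dm l0 l1 - Dm l0 l1 *m K2) = 2^-1 *: (L2 *m Dm l0 l1 + Dm l0 l1 *m L2) ->
  complex.Im (\tr (Dm l0 l1 *m L1 *m L2)) = 4 * (l0 - l1)^+3 * complex.Im (K1 0 1 * K2 1 0).
Proof.
move=> hs hK1 hK2 E1 E2.
have e1 a b := congr1 (fun M : 'M[C]_2 => M a b) E1.
have e2 a b := congr1 (fun M : 'M[C]_2 => M a b) E2.
move: (e1 0 0) (e1 0 1) (e1 1 0) (e1 1 1) (e2 0 0) (e2 0 1) (e2 1 0) (e2 1 1) => /=.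
rewrite !mxE !sum2 !mxE /=.
have k1 := congr1 (fun M : 'M[C]_2 => M 1 0) hK1.
have k2 := congr1 (fun M : 'M[C]_2 => M 0 1) hK2.
move: k1 k2 => /=; rewrite !dagE.
rewrite /mxtrace sum2 !mxE !sum2 !mxE /= !sum2 !mxE /=.
have hsum : Complex l0 0 + Complex l1 0 = 1 :> C.
  by apply/eqP; rewrite eq_complex /= hs addr0 !eqxx.
set l0c := Complex l0 0 in hsum *; set l1c := Complex l1 0 in hsum *.
move=> k1 k2 /half_eq a00 /half_eq a01 /half_eq a10 /half_eq a11
  /half_eq b00 /half_eq b01 /half_eq b10 /half_eq b11.
have f00 : l0c * L1 0 0 = 0.
  apply/eqP; rewrite -(mulrI_eq0 _ (lregP two_neq0)); apply/eqP.
  transitivity (L1 0 0 * l0c + L1 0 1 * 0 + (l0c * L1 0 0 + 0 * L1 1 0)); first ring.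
  by rewrite a00; ring.
have f11 : l1c * L1 1 1 = 0.
  apply/eqP; rewrite -(mulrI_eq0 _ (lregP two_neq0)); apply/eqP.
  transitivity (L1 1 0 * 0 + L1 1 1 * l1c + (0 * L1 0 1 + l1c * L1 1 1)); first ring.
  by rewrite a11; ring.
have g00 : l0c * L2 0 0 = 0.
  apply/eqP; rewrite -(mulrI_eq0 _ (lregP two_neq0)); apply/eqP.
  transitivity (L2 0 0 * l0c + L2 0 1 * 0 + (l0c * L2 0 0 + 0 * L2 1 0)); first ring.
  by rewrite b00; ring.
have g11 : l1c * L2 1 1 = 0.
  apply/eqP; rewrite -(mulrI_eq0 _ (lregP two_neq0)); apply/eqP.
  transitivity (L2 1 0 * 0 + L2 1 1 * l1c + (0 * L2 0 1 + l1c * L2 1 1)); first ring.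
  by rewrite b11; ring.
have f01 : L1 0 1 = 2 * iC * (l1c - l0c) * K1 0 1.
  transitivity ((l0c + l1c) * L1 0 1); first by rewrite hsum mul1r.
  transitivity (L1 0 0 * 0 + L1 0 1 * l1c + (l0c * L1 0 1 + 0 * L1 1 1)); first ring.
  by rewrite a01; ring.
have f10 : L1 1 0 = 2 * iC * (l0c - l1c) * K1 1 0.
  transitivity ((l0c + l1c) * L1 1 0); first by rewrite hsum mul1r.
  transitivity (L1 1 0 * l0c + L1 1 1 * 0 + (0 * L1 0 0 + l1c * L1 1 0)); first ring.
  by rewrite a10; ring.
have g01 : L2 0 1 = 2 * iC * (l1c - l0c) * K2 0 1.
  transitivity ((l0c + l1c) * L2 0 1); first by rewrite hsum mul1r.
  transitivity (L2 0 0 * 0 + L2 0 1 * l1c + (l0c * L2 0 1 + 0 * L2 1 1)); first ring.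
  by rewrite b01; ring.
have g10 : L2 1 0 = 2 * iC * (l0c - l1c) * K2 1 0.
  transitivity ((l0c + l1c) * L2 1 0); first by rewrite hsum mul1r.
  transitivity (L2 1 0 * l0c + L2 1 1 * 0 + (0 * L2 0 0 + l1c * L2 1 0)); first ring.
  by rewrite b10; ring.
rewrite !mul0r !addr0 !add0r f00 f11 !mul0r !add0r !addr0 f01 f10 g01 g10 -k1 -k2.
rewrite /l0c /l1c.
move: (K1 0 1) (K2 1 0) => [a b] [c d].
rewrite !(cImD, cImM, cReM, cReD) /= ?Re2 ?Im2.
ring.
Qed.

Section Conj.
Variable W : 'M[C]_2.
Hypothesis hW : adj W *m W = 1%:M.
Let hW' : W *m adj W = 1%:M. Proof. exact: mulmx1C. Qed.
Definition cj (X : 'M[C]_2) := W *m X *m adj W.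
Lemma cjM X Y : cj X *m cj Y = cj (X *m Y).
Proof.
rewrite /cj !mulmxA -(mulmxA (W *m X) (adj W) W) hW mulmx1 //.
Qed.
Lemma cjD X Y : cj X + cj Y = cj (X + Y).
Proof. by rewrite /cj mulmxDr mulmxDl. Qed.
Lemma cjZ a X : a *: cj X = cj (a *: X).
Proof. by rewrite /cj scalemxAl scalemxAr. Qed.
Lemma cj_inj X Y : cj X = cj Y -> X = Y.
Proof.
move=> E; have := congr1 (fun Z : 'M[C]_2 => adj W *m Z *m W) E.
rewrite /cj /= !mulmxA hW !mul1mx -!mulmxA hW !mulmx1 //.
Qed.
Lemma cjK L : L = cj (adj W *m L *m W).
Proof. by rewrite /cj !mulmxA hW' mul1mx -mulmxA hW' mulmx1. Qed.
Lemma cj_tr X : \tr (cj X) = \tr X.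
Proof. by rewrite /cj mxtrace_mulC mulmxA hW mul1mx. Qed.
End Conj.


Lemma core (l0 l1 : R) (W K1 K2 L1 L2 : 'M[C]_2) :
  l0 + l1 = 1 -> adj W *m W = 1%:M -> adj K1 = K1 -> adj K2 = K2 ->
  W *m (iC *: (K1 *m Dm l0 l1 - Dm l0 l1 *m K1)) *m adj W =
    2^-1 *: (L1 *m (W *m Dm l0 l1 *m adj W) + (W *m Dm l0 l1 *m adj W) *m L1) ->
  W *m (iC *: (K2 *m Dm l0 l1 - Dm l0 l1 *m K2)) *m adj W =
    2^-1 *: (L2 *m (W *m Dm l0 l1 *m adj W) + (W *m Dm l0 l1 *m adj W) *m L2) ->
  complex.Im (\tr (W *m Dm l0 l1 *m adj W *m L1 *m L2)) =
    4 * (l0 - l1)^+3 * complex.Im (K1 0 1 * K2 1 0).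
Proof.
move=> hs hW hK1 hK2.
rewrite (@cjK W hW L1) (@cjK W hW L2).
move: (adj W *m L1 *m W) (adj W *m L2 *m W) => M1 M2.
rewrite -/(cj W _) -/(cj W (Dm l0 l1)) !(@cjM W hW) !(@cjD W) !(@cjZ W) => /(@cj_inj W hW) E1 /(@cj_inj W hW) E2.
rewrite (@cj_tr W hW).
exact: core_entries.
Qed.
End S.

Set Implicit Arguments. Unset Strict Implicit.

Section S.
Variable R : realType.
Local Notation C := (R[i]).
Local Notation iC := (Complex (0:R) 1).

Lemma ord2 (a : 'I_2) : a = 0 \/ a = 1.
Proof. case: a => [[|[|//]] h]; [left|right]; exact: val_inj. Qed.

Definition Vm (p0 p1 : 'cV[C]_2) : 'M[C]_2 :=
  \matrix_(r, c) (if c == 0 then p0 r 0 else p1 r 0).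

Lemma Vm_unit (p0 p1 : 'cV[C]_2) :
  adj p0 *m p0 = 1%:M -> adj p1 *m p1 = 1%:M -> adj p0 *m p1 = 0 ->
  adj (Vm p0 p1) *m Vm p0 p1 = 1%:M.
Proof.
move=> h0 h1 h01.
have h10 : adj p1 *m p0 = 0 by rewrite -(dagK p0) -dagM h01 dag0.
move: (congr1 (fun M : 'M[C]_1 => M 0 0) h0) (congr1 (fun M : 'M[C]_1 => M 0 0) h1)
  (congr1 (fun M : 'M[C]_1 => M 0 0) h01) (congr1 (fun M : 'M[C]_1 => M 0 0) h10) => /=.
rewrite !mxE !sum2 !dagE => e0 e1 e01 e10.
apply/matrixP => a b; rewrite mulmx2E !dagE !mxE.
by case: (ord2 a) => ->; case: (ord2 b) => -> /=.
Qed.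

Lemma Vm_rho (p0 p1 : 'cV[C]_2) (l0 l1 : R) :
  (Complex l0 0) *: (p0 *m adj p0) + (Complex l1 0) *: (p1 *m adj p1) =
  Vm p0 p1 *m Dm l0 l1 *m adj (Vm p0 p1).
Proof.
apply/matrixP => a b; do 4 (rewrite ?mxE ?big_ord1 ?sum2 ?dagE /=).
ring.
Qed.

Lemma Vm_psi (p0 p1 : 'cV[C]_2) (X : 'M[C]_2) :
  (adj p0 *m X *m p0) 0 0 = (adj (Vm p0 p1) *m X *m Vm p0 p1) 0 0.
Proof.
do 4 (rewrite ?mxE ?big_ord1 ?sum2 ?dagE /=).
done.
Qed.

Lemma powR32 (a : R) : powR (a ^+ 2) (3%:R / 2%:R) = `|a| ^+ 3.
Proof.
rewrite -(real_normK (num_real a)) -powR_mulrn ?normr_ge0 // -powRrM.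
rewrite (_ : 2%:R * (3%:R / 2%:R) = 3%:R) ?powR_mulrn ?normr_ge0 //.
by field.
Qed.

Lemma cj_comp (A B Y : 'M[C]_2) : cj A (cj B Y) = cj (A *m B) Y.
Proof. by rewrite /cj dagM !mulmxA. Qed.
Lemma cjN (W X : 'M[C]_2) : - cj W X = cj W (- X).
Proof. by rewrite /cj mulmxN mulNmx. Qed.
Lemma cj_adj (W X : 'M[C]_2) : adj (cj W X) = cj W (adj X).
Proof. by rewrite /cj !dagM dagK mulmxA. Qed.
Lemma conj_real (r : R) : conjc (Complex r 0) = Complex r 0.
Proof. by apply/eqP; rewrite eq_complex /= oppr0 !eqxx. Qed.

Lemma frame (U V H : 'M[C]_2) (D : 'M[C]_2) :
  adj V *m V = 1%:M ->
  U *m (iC *: (H *m cj V D - cj V D *m H)) *m adj U =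
  cj (U *m V) (iC *: ((adj V *m H *m V) *m D - D *m (adj V *m H *m V))).
Proof.
move=> hV.
rewrite {1 2}(@cjK R V hV H) !(@cjM R V hV) cjN cjD cjZ -cj_comp.
by [].
Qed.

Lemma cconjM (x y : C) : conjc (x * y) = conjc x * conjc y.
Proof. by case: x => a b; case: y => c d; apply/eqP; rewrite eq_complex /=; apply/andP; split; apply/eqP; ring. Qed.
Lemma cconjB (x y : C) : conjc (x - y) = conjc x - conjc y.
Proof. by case: x => a b; case: y => c d; apply/eqP; rewrite eq_complex /=; apply/andP; split; apply/eqP; ring. Qed.
Lemma cconj2 : conjc (2 : C) = 2.
Proof. exact: conjc_nat. Qed.

Lemma sld_exists (a b : R) (W K : 'M[C]_2) :
  a + b = 1 -> adj W *m W = 1%:M -> adj K = K ->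
  exists L, adj L = L /\ cj W (iC *: (K *m Dm a b - Dm a b *m K)) =
     2^-1 *: (L *m cj W (Dm a b) + cj W (Dm a b) *m L).
Proof.
move=> hs hW hK.
pose L0 : 'M[C]_2 := \matrix_(r, c)
  (if r == c then 0 else if r == 0 then 2 * iC * (Complex b 0 - Complex a 0) * K 0 1
   else 2 * iC * (Complex a 0 - Complex b 0) * K 1 0).
exists (cj W L0); split.
  rewrite cj_adj; congr (cj W _).
  have k10 := congr1 (fun M : 'M[C]_2 => M 1 0) hK.
  move: k10 => /=; rewrite dagE => k10.
  apply/matrixP => r c; rewrite dagE !mxE.
  case: (ord2 r) => ->; case: (ord2 c) => -> /=;
    try (by apply/eqP; rewrite eq_complex /= oppr0 !eqxx).
    by rewrite !cconjM cconjB !conj_real conj_i cconj2 -k10 conjcK; ring.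
  by rewrite !cconjM cconjB !conj_real conj_i cconj2 k10; ring.
rewrite !(@cjM R W hW) cjD cjZ; congr (cj W _).
have hb : Complex b 0 = 1 - Complex a 0 :> C.
  by apply/eqP; rewrite eq_complex /=; apply/andP; split; apply/eqP; lra.
apply/matrixP => r c; rewrite !mxE !sum2 !mxE.
case: (ord2 r) => ->; case: (ord2 c) => -> /=; rewrite hb.
- by ring.
- by field.
- by field.
- by ring.
Qed.
End S.

Unset Implicit Arguments. Set Strict Implicit.

Lemma Im_herm (R : realType) (z : R[i]) : conjc z = z -> complex.Im z = 0.
Proof. by case: z => a b; case => h /=; lra. Qed.

Lemma psiE_lem (R : realType) (p0 p1 : 'cV[R[i]]_2) (H1 H2 : 'M[R[i]]_2) :
  adj (Vm p0 p1) *m Vm p0 p1 = 1%:M ->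
  adj (adj (Vm p0 p1) *m H1 *m Vm p0 p1) = adj (Vm p0 p1) *m H1 *m Vm p0 p1 ->
  adj (adj (Vm p0 p1) *m H2 *m Vm p0 p1) = adj (Vm p0 p1) *m H2 *m Vm p0 p1 ->
  complex.Im ((adj p0 *m H1 *m H2 *m p0) 0 0) =
  complex.Im ((adj (Vm p0 p1) *m H1 *m Vm p0 p1) 0 1 * (adj (Vm p0 p1) *m H2 *m Vm p0 p1) 1 0).
Proof.
move=> hV h1 h2.
have hV' : Vm p0 p1 *m adj (Vm p0 p1) = 1%:M by apply: mulmx1C.
move: h1 h2; set V := Vm p0 p1; set K1 := adj V *m H1 *m V; set K2 := adj V *m H2 *m V => h1 h2.
rewrite -(mulmxA (adj p0)) (Vm_psi p0 p1) -/V.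
have -> : adj V *m (H1 *m H2) *m V = K1 *m K2.
  rewrite /K1 /K2 !mulmxA -(mulmxA (adj V *m H1) V (adj V)) hV' mulmx1.
  done.
have k1 : complex.Im (K1 0 0) = 0.
  have := congr1 (fun M : 'M[R[i]]_2 => M 0 0) h1.
  by rewrite /= dagE => /Im_herm.
have k2 : complex.Im (K2 0 0) = 0.
  have := congr1 (fun M : 'M[R[i]]_2 => M 0 0) h2.
  by rewrite /= dagE => /Im_herm.
by rewrite mulmx2E cImD (cImM (K1 0 0)) k1 k2 mulr0 mul0r addr0 add0r.
Qed.

Lemma cube_neg (R : realType) (a : R) : -1 * (- a) ^+ 3 = a ^+ 3.
Proof. by ring. Qed.

Lemma fin_eq (R : realType) (a z sv cv : R) : sv * cv = a ^+ 3 ->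
  4 * a ^+ 3 * z = sv * cv * (4 * (1 - 0) ^+ 3 * z) /\ 4 * a ^+ 3 * z = sv * 4 * cv * z.
Proof. by move=> h; rewrite -h; split; ring. Qed.

Theorem mainTheorem5 (R : realType) (l0 l1 : R) (psi0 psi1 : 'cV[R[i]]_2)
  (rho : 'M[R[i]]_2) (U : 'rV[R]_2 -> 'M[R[i]]_2) :
  0 <= l0 -> 0 <= l1 -> l0 + l1 = 1 -> l0 != l1 ->
  adj psi0 *m psi0 = 1%:M -> adj psi1 *m psi1 = 1%:M -> adj psi0 *m psi1 = 0 ->
  rho = (Complex l0 0) *: (psi0 *m adj psi0) + (Complex l1 0) *: (psi1 *m adj psi1) ->
  (forall x, adj (U x) *m U x = 1%:M) ->
  smooth_mx U ->
  let rho_phi := fun x => U x *m rho *m adj (U x) in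
  let P := fun x => (U x *m psi0) *m adj (U x *m psi0) in
  let s : R := if l1 < l0 then 1 else -1 in
  let c : R := powR (2 * complex.Re (\tr (rho *m rho)) - 1) (3%:R / 2%:R) in
  forall x : 'rV[R]_2,
    (forall k, exists L, is_SLD rho_phi k x L) /\
    (forall k, exists L, is_SLD P k x L) /\
    (forall (i j : 'I_2) (Li Lj Mi Mj : 'M[R[i]]_2),
       is_SLD rho_phi i x Li -> is_SLD rho_phi j x Lj ->
       is_SLD P i x Mi -> is_SLD P j x Mj ->
       uhlmann (rho_phi x) Li Lj = s * c * uhlmann (P x) Mi Mj /\
       uhlmann (rho_phi x) Li Lj =
         s * 4 * c * complex.Im ((adj psi0 *m effH U i x *m effH U j x *m psi0) 0 0)).
Proof.
move=> hl0 hl1 hs hne h0 h1 h01 hrho hU sU rho_phi P s c x.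
pose V := Vm psi0 psi1.
have hV : adj V *m V = 1%:M := Vm_unit h0 h1 h01.
have hV' : V *m adj V = 1%:M by apply: mulmx1C.
pose W := U x *m V.
have hW : adj W *m W = 1%:M.
  by rewrite /W dagM -mulmxA (mulmxA (adj (U x))) hU mul1mx.
have erho : rho = cj V (Dm l0 l1) by rewrite hrho Vm_rho.
have hs10 : (1:R) + 0 = 1 by rewrite addr0.
have eP0 : psi0 *m adj psi0 = cj V (Dm 1 0).
  rewrite /cj -(Vm_rho psi0 psi1 1 0) (_ : Complex 1 0 = 1) // (_ : Complex 0 0 = 0) //.
  by rewrite scale1r scale0r addr0.
have erx : rho_phi x = cj W (Dm l0 l1).
  by rewrite /rho_phi /= -/(cj (U x) rho) erho cj_comp.
have ePx : P x = cj W (Dm 1 0).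
  rewrite /P /= (_ : U x *m psi0 *m adj (U x *m psi0) = cj (U x) (psi0 *m adj psi0)); last by rewrite /cj dagM !mulmxA.
  by rewrite eP0 cj_comp.
have eP : P = fun y => U y *m (psi0 *m adj psi0) *m adj (U y).
  by apply/funext => y; rewrite /P dagM !mulmxA.
pose K k := adj V *m effH U k x *m V.
have hK : forall k, adj (K k) = K k.
  move=> k; rewrite /K !dagM dagK (@effH_herm R U k x hU sU).1 mulmxA //.
have drho : forall k, pd k rho_phi x = cj W (Complex (0:R) 1 *: (K k *m Dm l0 l1 - Dm l0 l1 *m K k)).
  move=> k; rewrite /rho_phi (@pd_conj R U rho k x hU sU) erho.
  by rewrite (@frame R (U x) V (effH U k x) (Dm l0 l1) hV).
have dP : forall k, pd k P x = cj W (Complex (0:R) 1 *: (K k *m Dm 1 0 - Dm 1 0 *m K k)).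
  move=> k; rewrite eP (@pd_conj R U _ k x hU sU) eP0.
  by rewrite (@frame R (U x) V (effH U k x) (Dm 1 0) hV).
split; [|split].
- move=> k; have [L [hL e]] := sld_exists hs hW (hK k).
  by exists L; rewrite /is_SLD drho erx.
- move=> k; have [L [hL e]] := sld_exists hs10 hW (hK k).
  by exists L; rewrite /is_SLD dP ePx.
move=> i j Li Lj Mi Mj [_ ei] [_ ej] [_ fi] [_ fj].
rewrite drho erx in ei; rewrite drho erx in ej; rewrite dP ePx in fi; rewrite dP ePx in fj.
have uR : uhlmann (rho_phi x) Li Lj = 4 * (l0 - l1)^+3 * complex.Im (K i 0 1 * K j 1 0).
  by rewrite /uhlmann erx; exact: core hs hW (hK i) (hK j) ei ej.
have uP : uhlmann (P x) Mi Mj = 4 * (1 - 0)^+3 * complex.Im (K i 0 1 * K j 1 0).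
  by rewrite /uhlmann ePx; exact: core hs10 hW (hK i) (hK j) fi fj.
have tr2 : complex.Re (\tr (rho *m rho)) = l0 ^+ 2 + l1 ^+ 2.
  rewrite erho (@cjM R V hV) (@cj_tr R V hV).
  rewrite /mxtrace sum2 !mxE !sum2 !mxE /=.
  by ring.
have sc : s * c = (l0 - l1) ^+ 3.
  rewrite /c tr2.
  have -> : 2 * (l0 ^+ 2 + l1 ^+ 2) - 1 = (l0 - l1) ^+ 2.
    have -> : l1 = 1 - l0 by lra.
    by ring.
  rewrite powR32 /s; case: ifP => hlt.
    have h : 0 < l0 - l1 by rewrite subr_gt0.
    by rewrite mul1r (gtr0_norm h).
  have h : l0 - l1 < 0.
    by rewrite subr_lt0 lt_neqAle hne /= leNgt hlt.
  by rewrite (ltr0_norm h) cube_neg.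
have psiE : complex.Im ((adj psi0 *m effH U i x *m effH U j x *m psi0) 0 0) =
            complex.Im (K i 0 1 * K j 1 0).
  exact: psiE_lem hV (hK i) (hK j).
rewrite uR uP psiE.
exact: fin_eq sc.
Qed.
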